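(* For every $r\in\left(0,\frac{\pi}{3}\right]$, the open $r$-thickening $B_r(\mathbb{S}^1,\mathbf{E}(\mathbb{S}^1))=\{f\in\mathbf{E}(\mathbb{S}^1):\exists\,\theta\in\mathbb{S}^1\text{ with }\|f-d_{\mathbb{S}^1}(\theta,\cdot)\|_\infty<r\}$ is homotopy equivalent to $\mathbb{S}^1$.
   Context: $\mathbb{S}^1=\mathbb{R}/2\pi$ with its geodesic metric $d_{\mathbb{S}^1}$ (diameter $\pi$). For a metric space $(X,d_X)$, $\Delta(X)=\{f:X\to\mathbb{R}\text{ bounded}: f(x)+f(x')\ge d_X(x,x')\ \forall x,x'\}$, and the tight span $\mathbf{E}(X)$ is the set of pointwise-minimal elements of $\Delta(X)$ with the sup-norm metric. $\mathbb{S}^1$ is regarded as a subspace of $\mathbf{E}(\mathbb{S}^1)$ via the Kuratowski embedding $\theta\mapsto d_{\mathbb{S}^1}(\theta,\cdot)$. *)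

(* Defs.v *)
From Stdlib Require Import Reals Lra.
Open Scope R_scope.

(* S^1 = R / 2pi, represented by the canonical representatives in [0, 2pi). *)
Definition S1 : Type := { x : R | 0 <= x < 2 * PI }.

(* Geodesic metric on R/2pi, written out on representatives in [0,2pi):
   d(x,y) = min(|x - y|, 2pi - |x - y|). Diameter pi. *)
Definition dS1 (x y : S1) : R :=
  Rmin (Rabs (proj1_sig x - proj1_sig y)) (2 * PI - Rabs (proj1_sig x - proj1_sig y)).

Definition bounded_fun (f : S1 -> R) : Prop :=
  exists M, forall x, Rabs (f x) <= M.

Definition in_Delta (f : S1 -> R) : Prop :=
  bounded_fun f /\ forall x x', f x + f x' >= dS1 x x'.

Definition in_tight_span (f : S1 -> R) : Prop :=
  in_Delta f /\
  forall g, in_Delta g -> (forall x, g x <= f x) -> forall x, g x = f x.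

Definition kur (theta : S1) : S1 -> R := fun x => dS1 theta x.

Definition supdist_lt (f g : S1 -> R) (r : R) : Prop :=
  exists s, s < r /\ forall x, Rabs (f x - g x) <= s.

Definition thickening (r : R) (f : S1 -> R) : Prop :=
  in_tight_span f /\ exists theta : S1, supdist_lt f (kur theta) r.

(* A "closeness" predicate: close x y e  means  d(x,y) < e. *)
Definition closeness (T : Type) := T -> T -> R -> Prop.

Definition close_S1 : closeness S1 := fun x y e => dS1 x y < e.
Definition close_fun : closeness (S1 -> R) := fun f g e => supdist_lt f g e.
Definition close_unit : closeness R := fun s t e => Rabs (s - t) < e.
(* max-metric on a product, inducing the product topology *)
Definition close_prod {T U} (cT : closeness T) (cU : closeness U)
  : closeness (T * U) :=
  fun p q e => cT (fst p) (fst q) e /\ cU (snd p) (snd q) e.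

Definition cont_between {T U} (cT : closeness T) (cU : closeness U)
  (A : T -> Prop) (B : U -> Prop) (F : T -> U) : Prop :=
  (forall x, A x -> B (F x)) /\
  forall x, A x -> forall eps, 0 < eps ->
    exists delta, 0 < delta /\
      forall y, A y -> cT x y delta -> cU (F x) (F y) eps.

Definition unit_interval (t : R) : Prop := 0 <= t <= 1.

Definition homotopy_equiv_S1 (A : (S1 -> R) -> Prop) : Prop :=
  exists (f : (S1 -> R) -> S1) (g : S1 -> (S1 -> R))
         (H : (S1 -> R) * R -> (S1 -> R)) (K : S1 * R -> S1),
    cont_between close_fun close_S1 A (fun _ => True) f /\
    cont_between close_S1 close_fun (fun _ => True) A g /\
    cont_between (close_prod close_fun close_unit) close_fun
      (fun p => A (fst p) /\ unit_interval (snd p)) A H /\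
    (forall h, A h -> forall x, H (h, 0) x = g (f h) x) /\
    (forall h, A h -> forall x, H (h, 1) x = h x) /\
    cont_between (close_prod close_S1 close_unit) close_S1
      (fun p => unit_interval (snd p)) (fun _ => True) K /\
    (forall x, K (x, 0) = f (g x)) /\
    (forall x, K (x, 1) = x).

(* Main.v *)
Require Import Defs.
From Stdlib Require Import Reals.
From Stdlib Require Import Lra Lia ProofIrrelevance ClassicalEpsilon Classical.
Open Scope R_scope.


Ltac dcase := unfold Rmin, Rabs in *; repeat (destruct (Rle_dec _ _)); repeat (destruct (Rcase_abs _)).

Lemma S1_eq (x y : S1) : proj1_sig x = proj1_sig y -> x = y.
Proof. destruct x as [x hx], y as [y hy]; simpl; intros ->; f_equal; apply proof_irrelevance. Qed.

Lemma S1_bnd (x : S1) : 0 <= proj1_sig x < 2 * PI.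
Proof. exact (proj2_sig x). Qed.

Lemma d_nonneg x y : 0 <= dS1 x y.
Proof. pose proof (S1_bnd x); pose proof (S1_bnd y); unfold dS1; dcase; lra. Qed.

Lemma d_sym x y : dS1 x y = dS1 y x.
Proof. pose proof (S1_bnd x); pose proof (S1_bnd y); unfold dS1; dcase; lra. Qed.

Lemma d_refl x : dS1 x x = 0.
Proof. pose proof (S1_bnd x); pose proof PI_RGT_0; unfold dS1; dcase; lra. Qed.

Lemma d_le_pi x y : dS1 x y <= PI.
Proof. pose proof (S1_bnd x); pose proof (S1_bnd y); unfold dS1; dcase; lra. Qed.

Lemma d_tri x y z : dS1 x z <= dS1 x y + dS1 y z.
Proof. pose proof (S1_bnd x); pose proof (S1_bnd y); pose proof (S1_bnd z);
 unfold dS1; dcase; lra. Qed.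

Definition anti (x : S1) : S1.
Proof.
  destruct (Rlt_dec (proj1_sig x) PI) as [h|h].
  - exists (proj1_sig x + PI). pose proof (S1_bnd x); pose proof PI_RGT_0; lra.
  - exists (proj1_sig x - PI). pose proof (S1_bnd x); pose proof PI_RGT_0; lra.
Defined.

Lemma anti_val x : proj1_sig (anti x) = proj1_sig x + PI /\ proj1_sig x < PI \/
                   proj1_sig (anti x) = proj1_sig x - PI /\ ~ proj1_sig x < PI.
Proof. unfold anti; destruct (Rlt_dec _ _); simpl; auto. Qed.

Lemma d_anti x y : dS1 x y + dS1 y (anti x) = PI.
Proof. pose proof (S1_bnd x); pose proof (S1_bnd y); pose proof PI_RGT_0;
  destruct (anti_val x) as [[e h]|[e h]]; unfold dS1; rewrite e; dcase; lra. Qed.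

Lemma d_x_anti x : dS1 x (anti x) = PI.
Proof. pose proof (d_anti x x). rewrite d_refl in H. lra. Qed.


Lemma Delta_nonneg h x : in_Delta h -> 0 <= h x.
Proof. intros [_ H]. specialize (H x x). rewrite d_refl in H. lra. Qed.

Lemma E_almost h x eps : in_tight_span h -> 0 < eps ->
  exists y, h x < dS1 x y - h y + eps.
Proof.
  intros [[[M HM] HD] Hmin] He.
  apply NNPP; intro Hn.
  assert (Hall : forall y, dS1 x y - h y + eps <= h x).
  { intro y. apply Rnot_lt_le. intro C. apply Hn. exists y. exact C. }
  set (g := fun z => if Req_EM_T (proj1_sig z) (proj1_sig x) then h x - eps/2 else h z).
  assert (Hx2 : eps <= 2 * h x). { specialize (Hall x). rewrite d_refl in Hall. lra. }
  assert (Hg : in_Delta g).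
  { split.
    - exists (M + eps). intro z. unfold g. destruct (Req_EM_T _ _).
      + specialize (HM x). unfold Rabs in *; destruct (Rcase_abs _); destruct (Rcase_abs _); lra.
      + specialize (HM z). lra.
    - intros z z'. unfold g.
      destruct (Req_EM_T _ _) as [e|e]; destruct (Req_EM_T (proj1_sig z') _) as [e'|e'].
      + apply S1_eq in e. apply S1_eq in e'. subst. rewrite d_refl. lra.
      + apply S1_eq in e. subst. specialize (Hall z'). lra.
      + apply S1_eq in e'. subst. specialize (Hall z). rewrite d_sym in Hall. lra.
      + apply HD. }
  assert (Hle : forall z, g z <= h z).
  { intro z. unfold g. destruct (Req_EM_T _ _) as [e|e].
    + apply S1_eq in e; subst; lra.
    + lra. }
  specialize (Hmin g Hg Hle x). unfold g in Hmin.
  destruct (Req_EM_T _ _) as [e|e]; [lra| apply e; reflexivity].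
Qed.

Lemma E_lip h a b : in_tight_span h -> h a - h b <= dS1 a b.
Proof.
  intros HE. apply Rnot_lt_le. intro C.
  destruct (E_almost h a (h a - h b - dS1 a b) HE) as [y Hy]; [lra|].
  destruct HE as [[_ HD] _].
  pose proof (HD b y). pose proof (d_tri a b y). lra.
Qed.

Lemma E_anti h x : in_tight_span h -> h x + h (anti x) = PI.
Proof.
  intros HE. apply Rle_antisym.
  - apply Rnot_lt_le. intro C.
    destruct (E_almost h x (h x + h (anti x) - PI) HE) as [y Hy]; [lra|].
    pose proof (E_lip h (anti x) y HE). pose proof (d_anti x y).
    rewrite (d_sym (anti x) y) in H. lra.
  - destruct HE as [[_ HD] _]. specialize (HD x (anti x)). rewrite d_x_anti in HD. lra.
Qed.

Lemma E_bounds h x : in_tight_span h -> 0 <= h x <= PI.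
Proof.
  intros HE. pose proof (E_anti h x HE).
  pose proof (Delta_nonneg h x (proj1 HE)). pose proof (Delta_nonneg h (anti x) (proj1 HE)). lra.
Qed.

Lemma E_intro F : in_Delta F -> (forall x, F x + F (anti x) <= PI) -> in_tight_span F.
Proof.
  intros HD HA. split; [exact HD|].
  intros g [_ Hg] Hle x. apply Rle_antisym; [apply Hle|].
  specialize (Hg x (anti x)). rewrite d_x_anti in Hg.
  specialize (Hle (anti x)). specialize (HA x). lra.
Qed.

Lemma kur_E t : in_tight_span (kur t).
Proof.
  apply E_intro.
  - split.
    + exists PI. intro x. unfold kur. pose proof (d_nonneg t x); pose proof (d_le_pi t x).
      rewrite Rabs_pos_eq; lra.
    + intros x x'. unfold kur. pose proof (d_tri x t x'). rewrite (d_sym x t) in H. lra.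
  - intro x. unfold kur. pose proof (d_anti x t). rewrite (d_sym x t) in H. lra.
Qed.

Lemma thick_intro r h t : in_tight_span h -> h t < r -> thickening r h.
Proof.
  intros HE Ht. split; [exact HE|]. exists t. exists (h t). split; [exact Ht|].
  intro x. unfold kur. pose proof (E_lip h x t HE). destruct HE as [[_ HD] _].
  pose proof (HD t x). rewrite (d_sym x t) in H.
  unfold Rabs; destruct (Rcase_abs _); lra.
Qed.

Lemma thick_elim r h : thickening r h -> in_tight_span h /\ exists t, h t < r.
Proof.
  intros [HE [t [s [Hs Hb]]]]. split; [exact HE|]. exists t.
  specialize (Hb t). unfold kur in Hb. rewrite d_refl in Hb.
  unfold Rabs in Hb; destruct (Rcase_abs _); lra.
Qed.

Lemma kur_close a b x : Rabs (kur a x - kur b x) <= dS1 a b.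
Proof.
  unfold kur. pose proof (d_tri a b x). pose proof (d_tri b a x). rewrite (d_sym b a) in H0.
  unfold Rabs; destruct (Rcase_abs _); lra.
Qed.


Definition off (q x : S1) : R :=
  let d := proj1_sig x - proj1_sig q in
  if Rlt_dec PI d then d - 2 * PI else if Rle_dec d (- PI) then d + 2 * PI else d.

Lemma off_range q x : - PI < off q x <= PI.
Proof. pose proof (S1_bnd x); pose proof (S1_bnd q); unfold off;
  destruct (Rlt_dec _ _); [|destruct (Rle_dec _ _)]; lra. Qed.

Lemma off_abs q x : Rabs (off q x) = dS1 q x.
Proof. pose proof (S1_bnd x); pose proof (S1_bnd q); pose proof PI_RGT_0; unfold off, dS1;
  destruct (Rlt_dec _ _); [|destruct (Rle_dec _ _)]; dcase; lra. Qed.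

Lemma off_cong q x : exists k, off q x = proj1_sig x - proj1_sig q + 2 * PI * IZR k.
Proof. unfold off;
  destruct (Rlt_dec _ _); [exists (-1)%Z|destruct (Rle_dec _ _); [exists 1%Z|exists 0%Z]];
  simpl; lra. Qed.

Lemma off_self q : off q q = 0.
Proof. pose proof PI_RGT_0. unfold off. destruct (Rlt_dec _ _); [lra|destruct (Rle_dec _ _)]; lra. Qed.

Lemma int_small k : -1 < IZR k < 1 -> k = 0%Z.
Proof. intros [a b]. apply lt_IZR in a. apply lt_IZR in b. lia. Qed.

Lemma uniq_mod a b k : 0 <= a < 2 * PI -> 0 <= b < 2 * PI -> a = b + 2 * PI * IZR k -> a = b.
Proof.
  intros Ha Hb E. pose proof PI_RGT_0.
  assert (k = 0%Z). { apply int_small. split.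
    - apply Rnot_le_lt; intro C. assert (2*PI*IZR k <= 2*PI*(-1)) by (apply Rmult_le_compat_l; lra). lra.
    - apply Rnot_le_lt; intro C. assert (2*PI*1 <= 2*PI*IZR k) by (apply Rmult_le_compat_l; lra). lra. }
  subst k. simpl in E. lra.
Qed.

Definition wrapv (y : R) : R := y - 2 * PI * (IZR (up (y / (2 * PI))) - 1).

Lemma wrapv_spec y : 0 <= wrapv y < 2 * PI.
Proof.
  pose proof PI_RGT_0. destruct (archimed (y / (2*PI))) as [a b]. unfold wrapv.
  set (u := IZR (up (y / (2 * PI)))) in *.
  assert (y = 2*PI*(y/(2*PI))) by (field; lra).
  split.
  - assert (2*PI*(u - y/(2*PI)) <= 2*PI*1) by (apply Rmult_le_compat_l; lra). nra.
  - assert (2*PI*(y/(2*PI)) < 2*PI*u) by (apply Rmult_lt_compat_l; lra). nra.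
Qed.

Definition wrapS (y : R) : S1 := exist _ (wrapv y) (wrapv_spec y).

Lemma wrapv_cong y : exists k, wrapv y = y + 2 * PI * IZR k.
Proof. exists (1 - up (y / (2*PI)))%Z. unfold wrapv. rewrite minus_IZR. simpl. lra. Qed.

Lemma wrapS_per y k : wrapS (y + 2 * PI * IZR k) = wrapS y.
Proof.
  apply S1_eq. simpl. destruct (wrapv_cong (y + 2*PI*IZR k)) as [k1 e1].
  destruct (wrapv_cong y) as [k2 e2].
  apply (uniq_mod _ _ (k1 + k - k2)%Z (wrapv_spec _) (wrapv_spec _)).
  rewrite e1, e2, !minus_IZR, !plus_IZR. ring.
Qed.

Lemma wrapS_id x : wrapS (proj1_sig x) = x.
Proof.
  apply S1_eq. simpl. destruct (wrapv_cong (proj1_sig x)) as [k e].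
  apply (uniq_mod _ _ k (wrapv_spec _) (S1_bnd x)). exact e.
Qed.

Lemma wrapS_dist a b : dS1 (wrapS a) (wrapS b) <= Rabs (a - b).
Proof.
  destruct (wrapv_cong a) as [k ek]. destruct (wrapv_cong b) as [l el].
  pose proof (wrapv_spec a); pose proof (wrapv_spec b). pose proof PI_RGT_0.
  unfold dS1; simpl. rewrite ek, el in *.
  destruct (Z.lt_trichotomy (k - l) 0) as [c|[c|c]].
  - assert (IZR (k - l) <= -1) by (apply IZR_le; lia). rewrite minus_IZR in H2.
    assert (2*PI*(IZR k - IZR l) <= 2*PI*(-1)) by (apply Rmult_le_compat_l; lra).
    dcase; lra.
  - assert (IZR k = IZR l) by (f_equal; lia). dcase; nra.
  - assert (1 <= IZR (k - l)) by (apply IZR_le; lia). rewrite minus_IZR in H2.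
    assert (2*PI*1 <= 2*PI*(IZR k - IZR l)) by (apply Rmult_le_compat_l; lra).
    dcase; lra.
Qed.

Lemma wrap_off q x : wrapS (proj1_sig q + off q x) = x.
Proof.
  destruct (off_cong q x) as [k e]. rewrite e.
  replace (proj1_sig q + (proj1_sig x - proj1_sig q + 2 * PI * IZR k)) with
    (proj1_sig x + 2 * PI * IZR k) by ring.
  rewrite wrapS_per. apply wrapS_id.
Qed.

Lemma wrap_dist_off q a x : dS1 (wrapS (proj1_sig q + a)) x <= Rabs (a - off q x).
Proof.
  rewrite <- (wrap_off q x) at 1. eapply Rle_trans; [apply wrapS_dist|].
  right. f_equal. ring.
Qed.


Definition pt0 : S1 := wrapS 0.

Definition IsSup (F : S1 -> R) (R0 : R) : Prop :=
  (forall x, F x <= R0) /\ (forall e, 0 < e -> exists x, R0 - e < F x).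

Definition IsInf (F : S1 -> R) (m : R) : Prop :=
  (forall x, m <= F x) /\ (forall e, 0 < e -> exists x, F x < m + e).

Lemma sup_exists F B : (forall x, F x <= B) -> exists R0, IsSup F R0.
Proof.
  intros HB.
  destruct (completeness (fun y => exists x, y = F x)) as [M [HM1 HM2]].
  - exists B. intros y [x ->]. apply HB.
  - exists (F pt0). exists pt0. reflexivity.
  - exists M. split.
    + intros x. apply HM1. exists x. reflexivity.
    + intros e He. apply NNPP. intro C.
      assert (M <= M - e); [|lra].
      apply HM2. intros y [x ->]. apply Rnot_lt_le. intro C2. apply C. exists x. exact C2.
Qed.

Lemma inf_exists F : (forall x, 0 <= F x) -> exists m, IsInf F m.
Proof.
  intros H0. destruct (sup_exists (fun x => - F x) 0) as [M [H1 H2]].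
  - intro x. specialize (H0 x). lra.
  - exists (- M). split.
    + intro x. specialize (H1 x). lra.
    + intros e He. destruct (H2 e He) as [x Hx]. exists x. lra.
Qed.

Lemma sup_diff F G R1 R2 e : IsSup F R1 -> IsSup G R2 ->
  (forall x, Rabs (F x - G x) <= e) -> Rabs (R1 - R2) <= e.
Proof.
  intros [F1 F2] [G1 G2] H.
  assert (A : R1 <= R2 + e).
  { apply Rnot_lt_le. intro C. destruct (F2 (R1 - R2 - e)) as [x Hx]; [lra|].
    specialize (G1 x). specialize (H x). unfold Rabs in H; destruct (Rcase_abs _); lra. }
  assert (B : R2 <= R1 + e).
  { apply Rnot_lt_le. intro C. destruct (G2 (R2 - R1 - e)) as [x Hx]; [lra|].
    specialize (F1 x). specialize (H x). unfold Rabs in H; destruct (Rcase_abs _); lra. }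
  unfold Rabs; destruct (Rcase_abs _); lra.
Qed.

Lemma sup_le F R1 B : IsSup F R1 -> (forall x, F x <= B) -> R1 <= B.
Proof.
  intros [_ F2] H. apply Rnot_lt_le. intro C. destruct (F2 (R1 - B)) as [x Hx]; [lra|].
  specialize (H x). lra.
Qed.

Lemma zero_mod k : Rabs (2 * PI * IZR k) < 2 * PI -> k = 0%Z.
Proof.
  intro H. pose proof PI_RGT_0. apply int_small.
  unfold Rabs in H; destruct (Rcase_abs _); split; nra.
Qed.

Definition minf (h : S1 -> R) : R := epsilon (inhabits 0) (IsInf h).


Section Main.
Variable r : R.
Hypothesis hr0 : 0 < r.
Hypothesis hr : r <= PI / 3.

Definition Pen m v := 5 * r * (v - m) / (r - m).
Definition val h q x := off q x - Pen (minf h) (h x).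
Definition Rq h q := epsilon (inhabits 0) (IsSup (val h q)).
Definition fmap h : S1 :=
  epsilon (inhabits pt0) (fun y => forall q, h q < r -> y = wrapS (proj1_sig q + Rq h q)).
Definition Aset h := in_tight_span h /\ exists t, h t < r.

Lemma minf_spec h : in_tight_span h -> IsInf h (minf h).
Proof.
  intro HE. unfold minf. apply epsilon_spec. apply inf_exists.
  intro x. apply (E_bounds h x HE).
Qed.

Lemma minf_lt h : Aset h -> 0 <= minf h < r.
Proof.
  intros [HE [t Ht]]. destruct (minf_spec h HE) as [I1 I2]. split.
  - apply Rnot_lt_le. intro C. destruct (I2 (- minf h)) as [x Hx]; [lra|].
    pose proof (E_bounds h x HE). lra.
  - specialize (I1 t). lra.
Qed.

Lemma Pen_nonneg m v : m < r -> m <= v -> 0 <= Pen m v.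
Proof. intros. unfold Pen. apply Rmult_le_pos; [nra|]. left; apply Rinv_0_lt_compat; lra. Qed.

Lemma Pen_ge m v : 0 <= m < r -> r <= v -> 5 * v <= Pen m v.
Proof.
  intros. unfold Pen, Rdiv. assert (Hi : 0 < / (r - m)) by (apply Rinv_0_lt_compat; lra).
  assert (He : (r - m) * / (r - m) = 1) by (field; lra).
  assert (0 <= 5 * m * (v - r) * / (r - m)) by (apply Rmult_le_pos; nra).
  replace (5 * v) with (5 * v * ((r - m) * / (r - m))) by (rewrite He; ring). nra.
Qed.

Lemma Pen_small m v : 0 <= m < r -> m <= v -> v < m + (r - m) / 10 -> Pen m v < r / 2.
Proof.
  intros. unfold Pen, Rdiv. assert (Hi : 0 < / (r - m)) by (apply Rinv_0_lt_compat; lra).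
  assert (He : (r - m) * / (r - m) = 1) by (field; lra).
  assert (5 * r * (v - m) < 5 * r * ((r - m) / 10)) by (apply Rmult_lt_compat_l; lra).
  assert (5 * r * (v - m) * / (r - m) < 5 * r * ((r - m) / 10) * / (r - m))
    by (apply Rmult_lt_compat_r; lra).
  replace (5 * r * ((r - m) / 10) * / (r - m)) with (r / 2) in H3 by (field; lra). lra.
Qed.

Lemma Rq_spec h q : Aset h -> IsSup (val h q) (Rq h q).
Proof.
  intro HA. unfold Rq. apply epsilon_spec. apply (sup_exists _ PI).
  intro x. unfold val. pose proof (off_range q x). pose proof (minf_lt h HA).
  destruct HA as [HE _]. destruct (minf_spec h HE) as [I1 _].
  pose proof (Pen_nonneg (minf h) (h x) ltac:(lra) (I1 x)). lra.
Qed.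

Lemma near_min h : Aset h -> exists t, h t < minf h + (r - minf h) / 10.
Proof.
  intro HA. pose proof (minf_lt h HA). destruct HA as [HE _].
  destruct (minf_spec h HE) as [_ I2]. apply I2. lra.
Qed.

Lemma Delta_d h x y : in_tight_span h -> dS1 x y <= h x + h y.
Proof. intros [[_ HD] _]. specialize (HD x y). lra. Qed.

Lemma off_le q x : off q x <= dS1 q x.
Proof. rewrite <- off_abs. apply Rle_abs. Qed.
Lemma off_ge q x : - dS1 q x <= off q x.
Proof. rewrite <- off_abs. unfold Rabs; destruct (Rcase_abs _); lra. Qed.

Lemma nonS h q x : Aset h -> h q < r -> r <= h x ->
  exists t, h t < r /\ val h q x < val h q t.
Proof.
  intros HA Hq Hx. destruct (near_min h HA) as [t Ht].
  pose proof (minf_lt h HA) as Hm. pose proof HA as [HE _].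
  destruct (minf_spec h HE) as [I1 _].
  exists t. split; [lra|]. unfold val.
  pose proof (Pen_ge _ _ Hm Hx). pose proof (Pen_small _ _ Hm (I1 t) Ht).
  pose proof (off_le q x). pose proof (off_ge q t).
  pose proof (Delta_d h q x HE). pose proof (Delta_d h q t HE). lra.
Qed.

Lemma off_shift h q q' x : Aset h -> h q < r -> h q' < r -> h x < r ->
  off q x = off q q' + off q' x.
Proof.
  intros HA Hq Hq' Hx. pose proof HA as [HE _].
  destruct (off_cong q x) as [k1 e1]. destruct (off_cong q q') as [k2 e2].
  destruct (off_cong q' x) as [k3 e3].
  assert (k1 - k2 - k3 = 0)%Z as K.
  { apply zero_mod. rewrite !minus_IZR.
    replace (2 * PI * (IZR k1 - IZR k2 - IZR k3)) with (off q x - off q q' - off q' x)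
      by (rewrite e1, e2, e3; ring).
    pose proof (off_abs q x). pose proof (off_abs q q'). pose proof (off_abs q' x).
    pose proof (Delta_d h q x HE). pose proof (Delta_d h q q' HE). pose proof (Delta_d h q' x HE).
    pose proof PI_RGT_0.
    revert H H0 H1. unfold Rabs; repeat destruct (Rcase_abs _); intros; lra. }
  assert (IZR k1 = IZR k2 + IZR k3) as K2.
  { rewrite <- plus_IZR. f_equal. lia. }
  rewrite e1, e2, e3, K2. ring.
Qed.

Lemma Rq_shift h q q' : Aset h -> h q < r -> h q' < r -> Rq h q = off q q' + Rq h q'.
Proof.
  intros HA Hq Hq'.
  pose proof (Rq_spec h q HA) as S1'. pose proof (Rq_spec h q' HA) as S2'.
  assert (Eq : forall x, h x < r -> val h q x = off q q' + val h q' x).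
  { intros x Hx. unfold val. rewrite (off_shift h q q' x HA Hq Hq' Hx). ring. }
  apply Rle_antisym.
  - apply (sup_le _ _ _ S1'). intro x. destruct (Rlt_dec (h x) r) as [Hx|Hx].
    + rewrite Eq by exact Hx. pose proof (proj1 S2' x). lra.
    + destruct (nonS h q x HA Hq ltac:(lra)) as [t [Ht Hlt]].
      rewrite (Eq t Ht) in Hlt. pose proof (proj1 S2' t). lra.
  - cut (Rq h q' <= Rq h q - off q q'); [lra|].
    apply (sup_le _ _ _ S2'). intro x. destruct (Rlt_dec (h x) r) as [Hx|Hx].
    + pose proof (Eq x Hx). pose proof (proj1 S1' x). lra.
    + destruct (nonS h q' x HA Hq' ltac:(lra)) as [t [Ht Hlt]].
      pose proof (Eq t Ht). pose proof (proj1 S1' t). lra.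
Qed.

Lemma fmap_spec h q : Aset h -> h q < r -> fmap h = wrapS (proj1_sig q + Rq h q).
Proof.
  intros HA Hq. unfold fmap.
  assert (Ex : exists y, forall q', h q' < r -> y = wrapS (proj1_sig q' + Rq h q')).
  { exists (wrapS (proj1_sig q + Rq h q)). intros q' Hq'.
    rewrite (Rq_shift h q q' HA Hq Hq'). destruct (off_cong q q') as [k e]. rewrite e.
    replace (proj1_sig q + (proj1_sig q' - proj1_sig q + 2 * PI * IZR k + Rq h q'))
      with ((proj1_sig q' + Rq h q') + 2 * PI * IZR k) by ring.
    apply wrapS_per. }
  pose proof (epsilon_spec (inhabits pt0) _ Ex) as H. apply H. exact Hq.
Qed.



Lemma Pen_lip m m' v v' s : 0 <= m < r -> 0 <= m' < r -> Rabs (m - m') <= s -> s <= (r - m) / 2 ->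
  m <= v <= PI -> Rabs (v - v') <= s ->
  Rabs (Pen m v - Pen m' v') * ((r - m) * (r - m) / 2) <= 5 * r * (PI + 2 * (r - m)) * s.
Proof.
  intros Hm Hm' H1 H2 Hv H3.
  assert (B1 : - s <= m - m' <= s) by (unfold Rabs in H1; destruct (Rcase_abs _); lra).
  assert (B3 : - s <= v - v' <= s) by (unfold Rabs in H3; destruct (Rcase_abs _); lra).
  set (a := r - m) in *. set (a' := r - m').
  set (u := v - m). set (u' := v' - m').
  assert (Ha : 0 < a) by (unfold a in *; lra). assert (Ha' : a / 2 <= a') by (unfold a, a' in *; lra).
  assert (Hu : 0 <= u <= PI) by (unfold u in *; lra).
  assert (Haa : - s <= a' - a <= s) by (unfold a, a' in *; lra).
  assert (Huu : - (2 * s) <= u - u' <= 2 * s) by (unfold u, u' in *; lra).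
  set (X := u / a - u' / a').
  assert (EX : X * (a * a') = u * (a' - a) + a * (u - u')) by (unfold X; field; lra).
  assert (EP : Pen m v - Pen m' v' = 5 * r * X).
  { unfold Pen, X. fold a a'. unfold u, u'. field. lra. }
  rewrite EP. rewrite Rabs_mult, (Rabs_pos_eq (5 * r)) by lra.
  assert (HN : Rabs (X * (a * a')) <= (PI + 2 * a) * s).
  { rewrite EX. eapply Rle_trans; [apply Rabs_triang|]. rewrite !Rabs_mult.
    rewrite (Rabs_pos_eq u) by lra. rewrite (Rabs_pos_eq a) by lra.
    assert (Rabs (a' - a) <= s) by (unfold Rabs; destruct (Rcase_abs _); lra).
    assert (Rabs (u - u') <= 2 * s) by (unfold Rabs; destruct (Rcase_abs _); lra).
    assert (u * Rabs (a' - a) <= PI * s).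
    { apply Rle_trans with (u * s). apply Rmult_le_compat_l; lra.
      apply Rmult_le_compat_r; [pose proof (Rabs_pos (a'-a)); lra| lra]. }
    assert (a * Rabs (u - u') <= a * (2 * s)) by (apply Rmult_le_compat_l; lra). lra. }
  rewrite Rabs_mult, (Rabs_pos_eq (a * a')) in HN by nra.
  assert (Rabs X * (a * a / 2) <= Rabs X * (a * a')).
  { apply Rmult_le_compat_l; [apply Rabs_pos|nra]. }
  assert (0 <= 5 * r) by lra.
  replace (5 * r * Rabs X * (a * a / 2)) with (5 * r * (Rabs X * (a * a / 2))) by ring.
  replace (5 * r * (PI + 2 * a) * s) with (5 * r * ((PI + 2 * a) * s)) by ring.
  apply Rmult_le_compat_l; lra.
Qed.

Lemma minf_cont h h' s : Aset h -> Aset h' -> (forall x, Rabs (h x - h' x) <= s) ->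
  Rabs (minf h - minf h') <= s.
Proof.
  intros [HE _] [HE' _] Hs.
  destruct (minf_spec h HE) as [I1 I2]. destruct (minf_spec h' HE') as [J1 J2].
  assert (A : minf h <= minf h' + s).
  { apply Rnot_lt_le. intro C. destruct (J2 (minf h - minf h' - s)) as [x Hx]; [lra|].
    specialize (I1 x). specialize (Hs x). unfold Rabs in Hs; destruct (Rcase_abs _); lra. }
  assert (B : minf h' <= minf h + s).
  { apply Rnot_lt_le. intro C. destruct (I2 (minf h' - minf h - s)) as [x Hx]; [lra|].
    specialize (J1 x). specialize (Hs x). unfold Rabs in Hs; destruct (Rcase_abs _); lra. }
  unfold Rabs; destruct (Rcase_abs _); lra.
Qed.



Lemma fmap_cont h : Aset h -> forall eps, 0 < eps -> exists delta, 0 < delta /\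
  forall h', Aset h' -> supdist_lt h h' delta -> dS1 (fmap h) (fmap h') < eps.
Proof.
  intros HA eps He. pose proof HA as [HE [t Ht]].
  pose proof (minf_lt h HA) as Hm.
  set (m := minf h) in *. set (a := r - m).
  assert (Ha : 0 < a) by (unfold a; lra).
  set (Kc := 5 * r * (PI + 2 * a) / (a * a / 2)).
  assert (HK : 0 < Kc).
  { unfold Kc. pose proof PI_RGT_0. apply Rmult_lt_0_compat; [nra|].
    apply Rinv_0_lt_compat; nra. }
  exists (Rmin (r - h t) (Rmin (a / 2) (eps / Kc))).
  split.
  { apply Rmin_pos; [lra|]. apply Rmin_pos; [lra|]. apply Rdiv_lt_0_compat; lra. }
  intros h' HA' [s [Hs Hb]].
  assert (Hs1 : s < r - h t) by (eapply Rlt_le_trans; [exact Hs| apply Rmin_l]).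
  assert (Hs2 : s < a / 2) by (eapply Rlt_le_trans; [exact Hs| eapply Rle_trans; [apply Rmin_r| apply Rmin_l]]).
  assert (Hs3 : s < eps / Kc) by (eapply Rlt_le_trans; [exact Hs| eapply Rle_trans; [apply Rmin_r| apply Rmin_r]]).
  assert (Ht' : h' t < r).
  { specialize (Hb t). unfold Rabs in Hb; destruct (Rcase_abs _); lra. }
  rewrite (fmap_spec h t HA Ht), (fmap_spec h' t HA' Ht').
  eapply Rle_lt_trans; [apply wrapS_dist|].
  replace (proj1_sig t + Rq h t - (proj1_sig t + Rq h' t)) with (Rq h t - Rq h' t) by ring.
  apply Rle_lt_trans with (Kc * s).
  2:{ apply Rmult_lt_reg_r with (/ Kc). apply Rinv_0_lt_compat; lra.
      replace (Kc * s * / Kc) with s by (field; lra). exact Hs3. }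
  apply (sup_diff _ _ _ _ _ (Rq_spec h t HA) (Rq_spec h' t HA')).
  intro x. unfold val.
  replace (off t x - Pen (minf h) (h x) - (off t x - Pen (minf h') (h' x)))
    with (- (Pen (minf h) (h x) - Pen (minf h') (h' x))) by ring.
  rewrite Rabs_Ropp.
  pose proof (minf_lt h' HA') as Hm'.
  pose proof (minf_cont h h' s HA HA' Hb) as Hmm.
  destruct (minf_spec h HE) as [I1 _].
  pose proof (E_bounds h x HE) as Hbx.
  pose proof (Pen_lip m (minf h') (h x) (h' x) s Hm Hm' Hmm ltac:(unfold a in Hs2; lra)
     ltac:(split; [apply I1| apply Hbx]) (Hb x)) as HP.
  fold m a in HP.
  apply Rmult_le_reg_r with (a * a / 2). nra.
  replace (Kc * s * (a * a / 2)) with (5 * r * (PI + 2 * a) * s) by (unfold Kc; field; lra).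
  exact HP.
Qed.

Lemma Glemma h : Aset h -> exists x0, h x0 < r /\ dS1 (fmap h) x0 + h x0 < 2 * r.
Proof.
  intros HA. pose proof HA as [HE _]. pose proof (minf_lt h HA) as Hm.
  destruct (near_min h HA) as [t Ht].
  destruct (minf_spec h HE) as [I1 _].
  assert (Htr : h t < r) by lra.
  rewrite (fmap_spec h t HA Htr).
  set (R0 := Rq h t). destruct (Rq_spec h t HA) as [S1' S2']. fold R0 in S1', S2'.
  assert (Hvt : - (r / 2) < R0).
  { pose proof (S1' t). unfold val in H. rewrite off_self in H.
    pose proof (Pen_small _ _ Hm (I1 t) Ht). lra. }
  destruct (Rlt_dec (Rabs R0) (2 * r - h t)) as [C|C].
  - exists t. split; [exact Htr|]. pose proof (wrap_dist_off t R0 t). rewrite off_self, Rminus_0_r in H.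
    lra.
  - assert (HR : 2 * r - h t <= R0).
    { unfold Rabs in C; destruct (Rcase_abs _); lra. }
    destruct (S2' (r / 2)) as [x Hx]; [lra|].
    unfold val in Hx.
    assert (Hxr : h x < r).
    { apply Rnot_le_lt. intro C2. pose proof (Pen_ge _ _ Hm C2). pose proof (off_le t x).
      pose proof (Delta_d h t x HE). lra. }
    pose proof (Pen_nonneg _ _ (proj2 Hm) (I1 x)).
    pose proof (off_le t x). pose proof (Delta_d h t x HE).
    exists x. split; [exact Hxr|]. pose proof (wrap_dist_off t R0 x).
    unfold Rabs in H2; destruct (Rcase_abs _); lra.
Qed.

Lemma Aset_kur t : Aset (kur t).
Proof. split; [apply kur_E|]. exists t. unfold kur. rewrite d_refl. lra. Qed.

Lemma kur_fix t : fmap (kur t) = t.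
Proof.
  pose proof (Aset_kur t) as HA.
  assert (Hm : minf (kur t) = 0).
  { pose proof (minf_lt _ HA). destruct (minf_spec _ (proj1 HA)) as [I1 _].
    specialize (I1 t). assert (kur t t = 0) by (unfold kur; apply d_refl). lra. }
  assert (Ht : kur t t < r) by (unfold kur; rewrite d_refl; lra).
  rewrite (fmap_spec _ t HA Ht).
  assert (HR : Rq (kur t) t = 0).
  { pose proof (Rq_spec (kur t) t HA) as S. apply Rle_antisym.
    - apply (sup_le _ _ _ S). intro x. unfold val. rewrite Hm.
      replace (Pen 0 (kur t x)) with (5 * kur t x) by (unfold Pen; field; lra).
      pose proof (off_le t x). unfold kur. pose proof (d_nonneg t x). lra.
    - pose proof (proj1 S t). unfold val in H. rewrite Hm, off_self in H.
      replace (Pen 0 (kur t t)) with 0 in H by (unfold Pen, kur; rewrite d_refl; field; lra). lra. }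
  rewrite HR, Rplus_0_r. apply wrapS_id.
Qed.



Lemma thick_iff h : thickening r h <-> Aset h.
Proof.
  split.
  - intro T. exact (thick_elim r h T).
  - intros [HE [t Ht]]. exact (thick_intro r h t HE Ht).
Qed.

Definition Hmap (p : (S1 -> R) * R) : S1 -> R :=
  fun x => (1 - snd p) * kur (fmap (fst p)) x + snd p * fst p x.

Lemma Hmap_in h t : Aset h -> 0 <= t <= 1 -> Aset (Hmap (h, t)).
Proof.
  intros HA Ht. pose proof HA as [HE _].
  set (phi := fmap h).
  assert (HF : in_tight_span (Hmap (h, t))).
  { apply E_intro.
    - split.
      + exists PI. intro x. unfold Hmap; simpl. fold phi.
        pose proof (E_bounds h x HE). pose proof (E_bounds _ x (kur_E phi)).
        rewrite Rabs_pos_eq by nra. nra.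
      + intros x x'. unfold Hmap; simpl. fold phi.
        pose proof (proj2 (proj1 (kur_E phi)) x x'). pose proof (proj2 (proj1 HE) x x'). nra.
    - intro x. unfold Hmap; simpl. fold phi.
      pose proof (E_anti h x HE). pose proof (E_anti _ x (kur_E phi)). nra. }
  split; [exact HF|].
  destruct (Glemma h HA) as [x0 [H1 H2]]. fold phi in H2.
  set (d := dS1 phi x0) in *.
  pose proof (d_nonneg phi x0). fold d in H.
  pose proof (E_lip h phi x0 HE). fold d in H0.
  pose proof (Delta_nonneg h x0 (proj1 HE)).
  destruct (Rlt_dec (t * (d + h x0)) r) as [C|C].
  - exists phi. unfold Hmap; simpl. fold phi. unfold kur. rewrite d_refl.
    assert (t * h phi <= t * (d + h x0)) by (apply Rmult_le_compat_l; lra). lra.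
  - exists x0. unfold Hmap; simpl. fold phi. unfold kur. fold d.
    destruct (Rle_dec d (h x0)) as [D|D].
    + assert ((1 - t) * d <= (1 - t) * h x0) by (apply Rmult_le_compat_l; lra). lra.
    + assert (Hp : 0 < d + h x0) by lra.
      assert (E1 : ((1 - t) * d + t * h x0 - r) * (d + h x0) <= d * (d + h x0 - 2 * r)).
      { assert (r * (d - h x0) <= t * (d + h x0) * (d - h x0)) by (apply Rmult_le_compat_r; lra). nra. }
      assert (d * (d + h x0 - 2 * r) < 0) by (assert (0 < d) by lra; nra).
      nra.
Qed.



Lemma main_sec : homotopy_equiv_S1 (thickening r).
Proof.
  exists fmap, kur, Hmap, (fun p => fst p).
  split; [|split; [|split; [|split; [|split; [|split; [|split]]]]]].
  - split; [intros; exact I|].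
    intros h Th eps He. apply thick_iff in Th.
    destruct (fmap_cont h Th eps He) as [dl [Hdl Hc]].
    exists dl. split; [exact Hdl|]. intros h' Th' Hcl. apply thick_iff in Th'.
    exact (Hc h' Th' Hcl).
  - split.
    + intros t _. apply thick_iff. apply Aset_kur.
    + intros x _ eps He. exists eps. split; [exact He|]. intros y _ Hxy.
      exists (dS1 x y). split; [exact Hxy|]. intro z. apply kur_close.
  - split.
    + intros [h t] [Th Ht]. simpl in *. apply thick_iff. apply thick_iff in Th.
      apply Hmap_in; [exact Th| unfold unit_interval in Ht; exact Ht].
    + intros [h t] [Th Ht] eps He. simpl in *. apply thick_iff in Th.
      destruct (fmap_cont h Th (eps / 3) ltac:(lra)) as [dl [Hdl Hc]].
      pose proof PI_RGT_0.
      exists (Rmin dl (Rmin (eps / 3) (eps / (3 * PI)))). split.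
      { apply Rmin_pos; [lra|]. apply Rmin_pos; [lra|]. apply Rdiv_lt_0_compat; lra. }
      intros [h' t'] [Th' Ht'] [Hc1 Hc2]. simpl in *. apply thick_iff in Th'.
      unfold close_fun, close_unit, unit_interval in *.
      destruct Hc1 as [s [Hs Hb]].
      assert (Hs1 : s < dl) by (eapply Rlt_le_trans; [exact Hs| apply Rmin_l]).
      assert (Hs2 : s < eps / 3) by (eapply Rlt_le_trans; [exact Hs| eapply Rle_trans; [apply Rmin_r| apply Rmin_l]]).
      assert (Ht3 : Rabs (t - t') < eps / (3 * PI)) by (eapply Rlt_le_trans; [exact Hc2| eapply Rle_trans; [apply Rmin_r| apply Rmin_r]]).
      assert (HD : dS1 (fmap h) (fmap h') < eps / 3).
      { apply (Hc h' Th'). exists s. split; [lra| exact Hb]. }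
      set (D := dS1 (fmap h) (fmap h')) in *.
      exists (D + s + PI * Rabs (t - t')). split.
      { assert (PI * Rabs (t - t') < PI * (eps / (3 * PI))) by (apply Rmult_lt_compat_l; lra).
        replace (PI * (eps / (3 * PI))) with (eps / 3) in H0 by (field; lra). lra. }
      intro x. unfold Hmap; simpl.
      pose proof (kur_close (fmap h) (fmap h') x) as K1. fold D in K1.
      pose proof (Hb x) as K2.
      pose proof (E_bounds h' x (proj1 Th')) as B1.
      pose proof (E_bounds _ x (kur_E (fmap h'))) as B2.
      set (k := kur (fmap h) x) in *. set (k' := kur (fmap h') x) in *.
      replace ((1 - t) * k + t * h x - ((1 - t') * k' + t' * h' x)) with
        ((1 - t) * (k - k') + t * (h x - h' x) + (t - t') * (h' x - k')) by ring.
      eapply Rle_trans; [apply Rabs_triang|].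
      eapply Rle_trans; [apply Rplus_le_compat_r; apply Rabs_triang|].
      rewrite !Rabs_mult. rewrite (Rabs_pos_eq (1 - t)) by lra. rewrite (Rabs_pos_eq t) by lra.
      assert ((1 - t) * Rabs (k - k') <= D).
      { apply Rle_trans with (1 * Rabs (k - k')). apply Rmult_le_compat_r; [apply Rabs_pos|lra]. lra. }
      assert (t * Rabs (h x - h' x) <= s).
      { apply Rle_trans with (1 * Rabs (h x - h' x)). apply Rmult_le_compat_r; [apply Rabs_pos|lra]. lra. }
      assert (Rabs (h' x - k') <= PI) by (unfold Rabs; destruct (Rcase_abs _); lra).
      assert (Rabs (t - t') * Rabs (h' x - k') <= Rabs (t - t') * PI)
        by (apply Rmult_le_compat_l; [apply Rabs_pos| lra]).
      lra.
  - intros h _ x. unfold Hmap; simpl. ring.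
  - intros h _ x. unfold Hmap; simpl. ring.
  - split; [intros; exact I|]. intros x _ eps He. exists eps. split; [exact He|].
    intros y _ [H1 _]. exact H1.
  - intro x. simpl. symmetry. apply kur_fix.
  - intro x. reflexivity.
Qed.

End Main.

Theorem theorem3p29 (r : R) (hr0 : 0 < r) (hr : r <= PI / 3) :
  homotopy_equiv_S1 (thickening r).
Proof. exact (main_sec r hr0 hr). Qed.
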